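(* Let $k>1$, $n=k-1$, $N=2n+1$, and let $m_1,\dots,m_k$ be positive integers with $M=\mathrm{diag}(m_1,\dots,m_k)$. Let $P\in\mathbb{R}^{N\times k}$ be the deterministic transition matrix in which, for each $\ell\in[k-1]$, the row of the intervention $do(X^0_\ell=1)$ is the $\ell$-th standard basis vector $e_\ell$, and the rows of all the other $N-(k-1)$ interventions equal $e_k$. Then $$\lambda:=\min_{f}\left\|PM^{1/2}(P^\top f)^{\circ-1/2}\right\|_\infty^2=\sum_{\ell\in[k]}m_\ell,$$ the minimum being over frequency vectors $f$.
   Context: A frequency vector is $f\in\mathbb{R}^N$ with $f\ge0$ and $\sum_a f_a=1$. For a vector $x$ with nonnegative entries, $x^{\circ-1/2}$ is the vector with entries $x_i^{-1/2}$ (interpreted as $+\infty$ when $x_i=0$). Rows of $P$ are indexed by the $N$ atomic interventions at state $0$, namely $do()$ and $do(X^0_j=0),do(X^0_j=1)$ for $j\in[n]$; columns by the intermediate states $[k]$. *)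

(* Defs.v *)
From mathcomp Require Import all_boot all_order all_algebra.
From mathcomp Require Import reals constructive_ereal.
Set Implicit Arguments. Unset Strict Implicit. Unset Printing Implicit Defensive.
Import Order.TTheory GRing.Theory Num.Theory.
Local Open Scope ring_scope.

(* Atomic interventions at state 0 with n variables:
   None          == do()
   Some (j, b)   == do(X^0_j = b), j : 'I_n, b : bool. There are 2n+1 of them. *)
Definition interv (n : nat) : finType := option ('I_n * bool)%type.

(* The deterministic transition matrix P (rows: interventions, columns [k],
   column l (0-based) corresponds to intermediate state l+1). *)
Definition transP (R : nzRingType) (k : nat) (a : interv k.-1) (l : 'I_k) : R :=
  match a with
  | Some (j, true) => (nat_of_ord l == nat_of_ord j)%:R
  | _ => (nat_of_ord l == k.-1)%:R
  end.

Definition is_freq (R : numDomainType) (I : finType) (f : I -> R) : Prop :=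
  (forall a, 0 <= f a) /\ \sum_a f a = 1.

Definition inv_sqrt_e (R : rcfType) (x : R) : \bar R :=
  if x == 0 then +oo%E else ((Num.sqrt x)^-1)%:E.

Local Open Scope ereal_scope.

(* || P M^{1/2} (P^T f)^{o-1/2} ||_oo ^ 2, as an extended real,
   with the convention 0 * (+oo) = 0. *)
Definition objective (R : rcfType) (I : finType) (k : nat)
  (P : I -> 'I_k -> R) (m : 'I_k -> nat) (f : I -> R) : \bar R :=
  let g := fun l : 'I_k => (\sum_a P a l * f a)%R in
  let v := fun l : 'I_k => (Num.sqrt (m l)%:R)%:E * inv_sqrt_e (g l) in
  let w := fun a : I => \sum_(l < k) (P a l)%:E * v l in
  let nrm := \big[maxe/0]_(a : I) `| w a | in
  nrm * nrm.

(* Main.v *)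
Require Import Defs.
From mathcomp Require Import all_boot all_order all_algebra.
From mathcomp Require Import reals constructive_ereal.
Import Order.TTheory GRing.Theory Num.Theory.
Local Open Scope ring_scope.
Set Implicit Arguments. Unset Strict Implicit.

Section Aux.
Variable R : realType.
Variable n : nat.
Variable m : 'I_n.+1 -> nat.
Hypothesis hm : forall l, (0 < m l)%N.

Definition rowi (a : interv n) : 'I_n.+1 :=
  match a with Some (j, true) => lift ord_max j | _ => ord_max end.

Definition rep (l : 'I_n.+1) : interv n :=
  if unlift ord_max l is Some j then Some (j, true) else None.

Lemma rowi_rep l : rowi (rep l) = l.
Proof. by rewrite /rep; case: unliftP => [j ->|->]. Qed.

Lemma rep_rowi a : (if a is Some (_, false) then true else false) \/ rep (rowi a) = a.
Proof.
case: a => [[j [|]]|] /=; [right|left|right]=> //.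
  by rewrite /rep liftK.
by rewrite /rep unlift_none.
Qed.

Lemma transP_row a l : @transP R n.+1 a l = (l == rowi a)%:R.
Proof.
case: a => [[j [|]]|] //=; congr (_%:R); rewrite -val_eqE //=.
by rewrite /bump leqNgt ltn_ord.
Qed.

Definition gg (f : interv n -> R) l := \sum_a @transP R n.+1 a l * f a.
Definition vv (f : interv n -> R) l :=
  ((Num.sqrt (m l)%:R)%:E * inv_sqrt_e (gg f l))%E.
Definition NN f := (\big[maxe/0%E]_(a : interv n) `| vv f (rowi a) |)%E.

Lemma obj_eq f : objective (@transP R n.+1) m f = (NN f * NN f)%E.
Proof.
rewrite /objective /NN /=.
have E : forall a, (\sum_(l < n.+1) (@transP R n.+1 a l)%:E * vv f l)%E = vv f (rowi a).
  move=> a; rewrite (bigD1 (rowi a)) //= big1 ?adde0.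
    by rewrite transP_row eqxx mul1e.
  by move=> l hl; rewrite transP_row (negbTE hl) mul0e.
by congr (_ * _)%E; apply: eq_bigr => a _; rewrite -E.
Qed.

Lemma vv_ge0 f l : (0 <= vv f l)%E.
Proof.
apply: mule_ge0; first by rewrite lee_fin sqrtr_ge0.
rewrite /inv_sqrt_e; case: ifP => _; first exact: leey.
by rewrite lee_fin invr_ge0 sqrtr_ge0.
Qed.

Lemma NN_ge f l : (vv f l <= NN f)%E.
Proof.
rewrite -(rowi_rep l) /NN (bigD1 (rep l)) //= le_max gee0_abs ?lexx //.
exact: vv_ge0.
Qed.

Lemma sum_gg f : \sum_l gg f l = \sum_a f a.
Proof.
rewrite /gg exchange_big /=; apply: eq_bigr => a _.
rewrite -mulr_suml (bigD1 (rowi a)) //= big1 ?addr0.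
  by rewrite transP_row eqxx mul1r.
by move=> l hl; rewrite transP_row (negbTE hl).
Qed.

Lemma gg_ge0 f : (forall a, 0 <= f a) -> forall l, 0 <= gg f l.
Proof.
move=> hf l; apply: sumr_ge0 => a _; rewrite transP_row mulr_ge0 //.
Qed.

End Aux.

Theorem proposition4 (R : realType) (k : nat) (hk : (1 < k)%N)
  (m : 'I_k -> nat) (hm : forall l, (0 < m l)%N) :
  (exists f : interv k.-1 -> R,
      is_freq f /\ objective (@transP R k) m f = ((\sum_l m l)%N%:R)%:E)
  /\ (forall f : interv k.-1 -> R,
      is_freq f -> (((\sum_l m l)%N%:R)%:E <= objective (@transP R k) m f)%E).
Proof.
move: k hk m hm; case=> [//|n] hk m hm /=.
set S : R := ((\sum_l m l)%N)%:R.
have S0 : 0 < S by rewrite /S ltr0n (bigD1 ord0) //= addn_gt0 hm.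
split.
  pose f0 (a : interv n) : R := if a is Some (_, false) then 0 else (m (rowi a))%:R / S.
  have g0 : forall l, gg f0 l = (m l)%:R / S.
    move=> l; rewrite /gg (bigD1 (rep l)) //= big1 ?addr0.
      rewrite transP_row rowi_rep eqxx mul1r /f0.
      by rewrite /rep; case: unliftP => [j ->|->].
    move=> a ha; rewrite transP_row; case: eqP => [hl|]; last by rewrite mul0r.
    subst l; case: (rep_rowi a) => [|h]; last by rewrite h eqxx in ha.
    by case: a {ha} => [[j [|]]|] //= _; rewrite mulr0.
  have hf0 : is_freq f0.
    split.
      by case=> [[j [|]]|] //=; rewrite divr_ge0 ?ler0n // ltW.
    rewrite -sum_gg; under eq_bigr do rewrite g0.
    by rewrite -mulr_suml -natr_sum divff // gt_eqF.
  exists f0; split => //.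
  have v0 : forall l, vv m f0 l = (Num.sqrt S)%:E.
    move=> l; rewrite /vv g0 /inv_sqrt_e.
    have ml0 : 0 < (m l)%:R :> R by rewrite ltr0n.
    rewrite mulf_eq0 invr_eq0 (gt_eqF ml0) (gt_eqF S0) /= -EFinM.
    congr (_%:E); rewrite sqrtrM ?ler0n // sqrtrV ?ltW // invfM invrK mulrA.
    by rewrite divff ?mul1r // gt_eqF // sqrtr_gt0.
  have N0 : NN m f0 = (Num.sqrt S)%:E.
    apply/le_anti/andP; split; last by rewrite -(v0 ord0) NN_ge.
    rewrite /NN; apply: (big_ind (fun x => x <= (Num.sqrt S)%:E)%E).
    - by rewrite lee_fin sqrtr_ge0.
    - by move=> x y hx hy; rewrite ge_max hx hy.
    - by move=> a _; rewrite v0 gee0_abs // lee_fin sqrtr_ge0.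
  rewrite obj_eq N0 -EFinM -expr2 sqr_sqrtr // ltW //.
move=> f [hf0 hf1]; rewrite obj_eq.
have Nge0 : (0 <= NN m f)%E by apply: le_trans (NN_ge m f ord0); apply: vv_ge0.
case E : (NN m f) => [r| |]; last by rewrite E in Nge0.
  2: by rewrite mulyy leey.
have r0 : 0 <= r by rewrite E lee_fin in Nge0.
have hl : forall l, (m l)%:R <= r ^+ 2 * gg f l.
  move=> l; have := NN_ge m f l; rewrite E /vv /inv_sqrt_e.
  have sm : 0 < Num.sqrt (m l)%:R :> R by rewrite sqrtr_gt0 ltr0n.
  case: ifP => hg.
    by rewrite gt0_muley ?lee_fin // leNgt ltey.
  rewrite -EFinM lee_fin => h.
  have gp : 0 < gg f l by rewrite lt_def hg gg_ge0.
  have sg : 0 < Num.sqrt (gg f l) by rewrite sqrtr_gt0.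
  rewrite ler_pdivrMr // in h.
  have h2 := sqr_sqrtr (ler0n R (m l)).
  have h3 := sqr_sqrtr (ltW gp).
  rewrite -h2 -h3 -exprMn ler_pXn2r ?nnegrE ?mulr_ge0 ?sqrtr_ge0 //.
rewrite -EFinM lee_fin /S natr_sum.
apply: le_trans (_ : \sum_l r ^+ 2 * gg f l <= _).
  by apply: ler_sum => l _; apply: hl.
by rewrite -mulr_sumr sum_gg hf1 mulr1 expr2.
Qed.
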